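(* Let $z_1,\dots,z_k\in\mathbb{C}\setminus\{1\}$. Then: (a) The function $\vec n\mapsto\Psi^{\ell}_{\vec z}(\vec n)$ on $\mathbb{Z}^k$ satisfies $(1-q)\sum_{i=1}^k\nabla^{\mathrm{bwd}}_i\Psi^\ell_{\vec z}=(q-1)(z_1+\cdots+z_k)\Psi^\ell_{\vec z}$ on $\mathbb{Z}^k$ and the backward boundary conditions $\big((\nabla^{\mathrm{bwd}}_i-q\nabla^{\mathrm{bwd}}_{i+1})\Psi^\ell_{\vec z}\big)(\vec n)=0$ whenever $n_i=n_{i+1}$, $1\le i\le k-1$. Consequently, on $\mathbb{W}^k$, $\mathcal{H}^{\mathrm{bwd}}\Psi^\ell_{\vec z}=(q-1)(z_1+\cdots+z_k)\Psi^\ell_{\vec z}$. (b) The function $\Psi^{\mathrm{cfwd}}_{\vec z}(\vec n)=\sum_{\sigma\in S_k}\prod_{1\le B<A\le k}\frac{z_{\sigma(A)}-q^{-1}z_{\sigma(B)}}{z_{\sigma(A)}-z_{\sigma(B)}}\prod_{j=1}^k(1-z_{\sigma(j)})^{n_j}$ on $\mathbb{Z}^k$ satisfies $(1-q)\sum_{i}\nabla^{\mathrm{fwd}}_i\Psi^{\mathrm{cfwd}}_{\vec z}=(q-1)(z_1+\cdots+z_k)\Psi^{\mathrm{cfwd}}_{\vec z}$ and the forward boundary conditions $\big((q\nabla^{\mathrm{fwd}}_i-\nabla^{\mathrm{fwd}}_{i+1})\Psi^{\mathrm{cfwd}}_{\vec z}\big)(\vec n)=0$ whenever $n_i=n_{i+1}$.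 Consequently, on $\mathbb{W}^k$, $\mathcal{H}^{\mathrm{cfwd}}\Psi^{\mathrm{cfwd}}_{\vec z}=(q-1)(\sum_j z_j)\Psi^{\mathrm{cfwd}}_{\vec z}$ and $\mathcal{H}^{\mathrm{fwd}}\Psi^{r}_{\vec z}=(q-1)(\sum_j z_j)\Psi^{r}_{\vec z}$, where $\Psi^r_{\vec z}=C_q^{-1}\Psi^{\mathrm{cfwd}}_{\vec z}$.
   Context: Fix $q\in(0,1)$ and integer $k\ge1$. $\mathbb{W}^k=\{\vec n\in\mathbb{Z}^k:n_1\ge\cdots\ge n_k\}$; $\vec n_i^\pm$ changes the $i$-th coordinate by $\pm1$; $(\nabla^{\mathrm{bwd}}_iu)(\vec n)=u(\vec n_i^-)-u(\vec n)$, $(\nabla^{\mathrm{fwd}}_iu)(\vec n)=u(\vec n_i^+)-u(\vec n)$. For $\vec n\in\mathbb{W}^k$ with $M$ clusters of sizes $c_1,\dots,c_M$ (so $n_1=\cdots=n_{c_1}>n_{c_1+1}=\cdots$) and gaps $g_1=+\infty$, $g_i$ = (value of cluster $i-1$) $-$ (value of cluster $i$): $(c)!_q=\prod_{j=1}^c\frac{1-q^j}{1-q}$, $C_q(\vec n)=(-1)^kq^{-k(k-1)/2}\prod_i(c_i)!_q$; $(\mathcal{H}^{\mathrm{bwd}}f)(\vec n)=\sum_{i=1}^{M}(1-q^{c_i})\big(f(\vec n^{-}_{c_1+\cdots+c_i})-f(\vec n)\big)$; $(\mathcal{H}^{\mathrm{fwd}}f)(\vec n)=\sum_{i=1}^{M}\Big(\big((1-q^{c_{i-1}+1})\mathbf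 1_{g_i=1}+(1-q)\mathbf 1_{g_i>1}\big)f(\vec n^{+}_{c_1+\cdots+c_{i-1}+1})-(1-q^{c_i})f(\vec n)\Big)$ (index $1$ when $i=1$); $\mathcal{H}^{\mathrm{cfwd}}=C_q\mathcal{H}^{\mathrm{fwd}}C_q^{-1}$, i.e. $(\mathcal{H}^{\mathrm{cfwd}}f)(\vec n)=\sum_{i=1}^M(1-q^{c_i})(f(\vec n^+_{c_1+\cdots+c_{i-1}+1})-f(\vec n))$. $\Psi^{\ell}_{\vec z}(\vec n)=\sum_{\sigma\in S_k}\prod_{1\le B<A\le k}\frac{z_{\sigma(A)}-qz_{\sigma(B)}}{z_{\sigma(A)}-z_{\sigma(B)}}\prod_{j=1}^k(1-z_{\sigma(j)})^{-n_j}$. For fixed $\vec n$ these symmetrized expressions are symmetric Laurent polynomials in $1-z_1,\dots,1-z_k$ and are understood as such (so no distinctness of the $z_i$ is needed). *)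

(* Defs.v *)
From HB Require Import structures.
From mathcomp Require Import all_boot all_order all_algebra all_fingroup.
Set Implicit Arguments. Unset Strict Implicit. Unset Printing Implicit Defensive.
Import Order.TTheory GRing.Theory Num.Theory.
Local Open Scope ring_scope.

(* Points of Z^k are functions 'I_k -> int; coordinate i (0-based) is n i.
   Coordinate 1 of the paper is index 0 here. *)

Section Defs.
Variable R : numClosedFieldType.
Variable k : nat.
Implicit Types (q a : R) (z : 'I_k -> R) (n : 'I_k -> int).

Definition shift n (i : 'I_k) (d : int) : 'I_k -> int :=
  fun j => if j == i then n j + d else n j.

Definition nabla_bwd (i : 'I_k) (f : ('I_k -> int) -> R) n : R :=
  f (shift n i (-1)) - f n.
Definition nabla_fwd (i : 'I_k) (f : ('I_k -> int) -> R) n : R :=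
  f (shift n i 1) - f n.

Definition weyl n : Prop := forall i j : 'I_k, (i <= j)%N -> n j <= n i.

(* the value of coordinate l (a nat index), 0 if out of range *)
Definition nat_val n (l : nat) : int := odflt 0 (omap n (insub l : option 'I_k)).

(* For n in W^k, clusters are maximal blocks of consecutive equal coordinates.
   j is the last (resp. first) index of its cluster: *)
Definition is_last n (j : 'I_k) : bool :=
  ~~ (j.+1 < k)%N || (nat_val n j.+1 != n j).
Definition is_first n (j : 'I_k) : bool :=
  (val j == 0)%N || (nat_val n j.-1 != n j).
Definition csize_at n (l : nat) : nat := #|[pred i : 'I_k | n i == nat_val n l]|.

Definition qfact q (c : nat) : R := \prod_(1 <= j < c.+1) ((1 - q ^+ j) / (1 - q)).

Definition Cq q n : R :=
  (-1) ^+ k * (q ^+ ((k * (k - 1)) %/ 2))^-1 *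
  \prod_(j : 'I_k | is_last n j) qfact q (csize_at n j).

Definition Hbwd q (f : ('I_k -> int) -> R) n : R :=
  \sum_(j : 'I_k | is_last n j) (1 - q ^+ csize_at n j) * (f (shift n j (-1)) - f n).

(* coefficient in H^fwd for the cluster whose first index is j:
   g = +oo for the first cluster; otherwise g = n_{j-1} - n_j and c_{i-1} is the
   size of the cluster of index j-1 *)
Definition fwd_coef q n (j : 'I_k) : R :=
  if (val j == 0)%N then 1 - q
  else if nat_val n j.-1 - n j == 1 then 1 - q ^+ (csize_at n j.-1).+1
  else 1 - q.

Definition Hfwd q (f : ('I_k -> int) -> R) n : R :=
  \sum_(j : 'I_k | is_first n j)
     (fwd_coef q n j * f (shift n j 1) - (1 - q ^+ csize_at n j) * f n).

Definition Hcfwd q (f : ('I_k -> int) -> R) n : R :=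
  Cq q n * Hfwd q (fun m => f m / Cq q m) n.

(* ---- The symmetrized functions ----
   sym a e z n = sum_{sigma in S_k} prod_{B<A} (z_{s A} - a z_{s B})/(z_{s A} - z_{s B})
                  * prod_j (1 - z_{s j})^{e n_j}
   understood as the value at z of the symmetric Laurent polynomial in the 1 - z_i
   (no distinctness of the z_i needed).  Concretely: multiply by
   W^m := prod_j (1-z_j)^m (m = sum_j |n_j|), which makes it a polynomial in z;
   restrict to the line z(t) = z + t (0,1,...,k-1), on which it equals P(t)/D(t)
   with P(t) = sum_s sgn(s) prod_{B<A}(z_{sA}(t) - a z_{sB}(t)) prod_j (1-z_{sj}(t))^{m + e n_j}
   and D(t) = prod_{B<A}(z_A(t) - z_B(t)) (a nonzero polynomial, dividing P);
   evaluate the polynomial quotient at t = 0 and divide by W^m. *)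
Definition Zt z (j : 'I_k) : {poly R} := (z j)%:P + (j%:R) *: 'X.
Definition Wt z (j : 'I_k) : {poly R} := 1 - Zt z j.
Definition mexp n : nat := \sum_(j : 'I_k) absz (n j).

Definition sym_num a (e : int) z n : {poly R} :=
  \sum_(s : 'S_k) (-1) ^+ odd_perm s *
     (\prod_(A : 'I_k) \prod_(B : 'I_k | (B < A)%N) (Zt z (s A) - a *: Zt z (s B))) *
     \prod_(j : 'I_k) Wt z (s j) ^+ absz ((mexp n)%:Z + e * n j).

Definition sym_den z : {poly R} :=
  \prod_(A : 'I_k) \prod_(B : 'I_k | (B < A)%N) (Zt z A - Zt z B).

Definition sym a (e : int) z n : R :=
  ((sym_num a e z n) %/ (sym_den z)).[0] / \prod_(j : 'I_k) (1 - z j) ^+ mexp n.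

Definition Psi_l q z n : R := sym q (-1) z n.
Definition Psi_cfwd q z n : R := sym q^-1 1 z n.
Definition Psi_r q z n : R := Psi_cfwd q z n / Cq q n.

End Defs.

(* Main.v *)
Require Import Defs.
From HB Require Import structures.
From mathcomp Require Import all_boot all_order all_algebra all_fingroup.
Import Order.TTheory GRing.Theory Num.Theory.
Local Open Scope ring_scope.
Set Implicit Arguments. Unset Strict Implicit. Unset Printing Implicit Defensive.
From Stdlib Require Import FunctionalExtensionality.
From mathcomp Require Import zify ring lra.

Section Vand.
Variable S : comNzRingType.
Variable k : nat.

Definition vand (x : 'I_k -> S) : S := \prod_(A : 'I_k) \prod_(B : 'I_k | (B < A)%N) (x A - x B).

Definition remc (x : 'I_k -> S) (f : {poly S}) (l : 'I_k) : S :=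
  (Pdiv.Ring.rmodp f (\prod_(l < k) ('X - (x l)%:P)))`_l.

Lemma rem_exists (x : 'I_k -> S) (f : {poly S}) :
  forall i, f.[x i] = \sum_(l < k) remc x f l * x i ^+ l.
Proof.
rewrite /remc.
set P := \prod_(l < k) ('X - (x l)%:P).
have mP : P \is monic by apply: monic_prod_XsubC.
have sP : size P = k.+1 by rewrite /P -big_enum /= size_prod_XsubC size_enum_ord.
set r := Pdiv.Ring.rmodp f P.
have sr : (size r <= k)%N.
  have := Pdiv.Ring.ltn_rmodpN0 f (monic_neq0 mP). by rewrite sP.
move=> i.
have -> : f.[x i] = r.[x i].
  rewrite {1}(Pdiv.RingMonic.rdivp_eq mP f) hornerD hornerM.
  have -> : P.[x i] = 0.
    by rewrite horner_prod (bigD1 i) //= hornerXsubC subrr mul0r.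
  by rewrite mulr0 add0r.
by rewrite (horner_coef_wide _ sr).
Qed.

Definition altQ (x : 'I_k -> S) (f : 'I_k -> {poly S}) : S :=
  \det (\matrix_(j, l) remc x (f j) l).

Lemma alt_det (x : 'I_k -> S) (f : 'I_k -> {poly S}) :
  \sum_(s : 'S_k) (-1) ^+ odd_perm s * \prod_(j : 'I_k) (f j).[x (s j)] = vand x * altQ x f.
Proof.
rewrite /altQ; set C := \matrix_(j, l) remc x (f j) l.
have hC : forall j i, (f j).[x i] = \sum_(l < k) C j l * x i ^+ l.
  move=> j i; rewrite (rem_exists x (f j) i); apply: eq_bigr => l _; by rewrite mxE.
set a : 'rV[S]_k := \row_i x i.
have -> : \sum_(s : 'S_k) (-1) ^+ odd_perm s * \prod_(j : 'I_k) (f j).[x (s j)]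
   = \det (C *m Vandermonde k a).
  rewrite [RHS]/determinant; apply: eq_bigr => s _; congr (_ * _).
  apply: eq_bigr => j _; rewrite !mxE hC; apply: eq_bigr => l _; by rewrite !mxE.
rewrite det_mulmx det_Vandermonde mulrC; congr (_ * _).
rewrite /vand.
rewrite pair_big_dep /= pair_big_dep /=.
rewrite (reindex (fun p : 'I_k * 'I_k => (p.2, p.1))) /=; last first.
  by exists (fun p : 'I_k * 'I_k => (p.2, p.1)) => [[]|[]].
by apply: eq_bigr => p _; rewrite !mxE.
Qed.

Definition altQ2 (x : 'I_k -> S) (I : finType) (iota : I -> 'I_k) (h : I -> {poly S})
   (g : 'I_k -> {poly S}) : S :=
  altQ x (fun j => (\prod_(p | iota p == j) h p) * g j).

Lemma alt_prod (x : 'I_k -> S) (I : finType) (iota : I -> 'I_k) (h : I -> {poly S})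
   (g : 'I_k -> {poly S}) :
  \sum_(s : 'S_k) (-1) ^+ odd_perm s *
     (\prod_(p : I) (h p).[x (s (iota p))] * \prod_(j : 'I_k) (g j).[x (s j)])
  = vand x * altQ2 x iota h g.
Proof.
rewrite /altQ2 -alt_det; apply: eq_bigr => s _; congr (_ * _).
rewrite (partition_big iota xpredT) //= -big_split /=.
apply: eq_bigr => j _; rewrite hornerM horner_prod; congr (_ * _).
by apply: eq_bigr => p /eqP ->.
Qed.
End Vand.

Section Num.
Variable R : numClosedFieldType.
Variable k : nat.
Implicit Types (a : R) (z : 'I_k -> R) (n : 'I_k -> int).

Definition numE a z (ex : 'I_k -> nat) : {poly R} :=
  \sum_(s : 'S_k) (-1) ^+ odd_perm s *
     (\prod_(A : 'I_k) \prod_(B : 'I_k | (B < A)%N) (Zt z (s A) - a *: Zt z (s B))) *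
     \prod_(j : 'I_k) Wt z (s j) ^+ ex j.

Definition epsI (eps : {ffun 'I_k * 'I_k -> bool}) (p : 'I_k * 'I_k) : 'I_k :=
  if eps p then p.1 else p.2.
Definition epsH a (eps : {ffun 'I_k * 'I_k -> bool}) (p : 'I_k * 'I_k) : {poly {poly R}} :=
  if (p.2 < p.1)%N then (if eps p then 'X else - (a%:P)%:P * 'X)
  else (if eps p then 1 else 0).

Definition numQ a z ex : {poly R} :=
  \sum_(eps : {ffun 'I_k * 'I_k -> bool})
     altQ2 (Zt z) (epsI eps) (epsH a eps) (fun j => (1 - 'X) ^+ ex j).

Lemma numE_dvd a z ex : numE a z ex = sym_den z * numQ a z ex.
Proof.
rewrite /numQ mulr_sumr.
have -> : sym_den z = vand (Zt z) by [].
under [RHS]eq_bigr => eps _ do rewrite -alt_prod.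
rewrite exchange_big /=; apply: eq_bigr => s _.
rewrite -mulrA -mulr_sumr; congr (_ * _).
rewrite -mulr_suml.
have -> : \prod_(j : 'I_k) Wt z (s j) ^+ ex j = \prod_(j : 'I_k) ((1 - 'X) ^+ ex j).[Zt z (s j)].
  by apply: eq_bigr => j _; rewrite horner_exp hornerD hornerN hornerX hornerC.
congr (_ * _).
rewrite pair_big_dep /= big_mkcond /=.
rewrite (eq_bigr (fun p : 'I_k * 'I_k => \sum_(b : bool)
   (if (p.2 < p.1)%N then (if b then 'X else - (a%:P)%:P * 'X) else (if b then 1 else 0)).[
      Zt z (s (if b then p.1 else p.2))])); last first.
  move=> p _; rewrite big_bool /=.
  case: ifP => _; last by rewrite hornerC hornerC addr0.
  by rewrite hornerX hornerM hornerN !hornerC hornerX mulNr mul_polyC.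
rewrite bigA_distr_bigA /=; apply: eq_bigr => eps _.
by apply: eq_bigr => p _; rewrite /epsH /epsI.
Qed.


Lemma Zt_diff_neq0 z (A B : 'I_k) : (B < A)%N -> Zt z A - Zt z B != 0.
Proof.
move=> hBA; apply/eqP => /(congr1 (fun p : {poly R} => p`_1)).
rewrite /Zt coefB !coefD !coefC !coefZ coefX /= !mulr1 !add0r.
move/eqP; rewrite subr_eq0 eqr_nat => /eqP hAB; move: hBA; by rewrite hAB ltnn.
Qed.

Lemma den_neq0 z : sym_den z != 0.
Proof.
apply/prodf_neq0 => A _; apply/prodf_neq0 => B hB; exact: Zt_diff_neq0.
Qed.

Definition exf (e : int) n (M : nat) (j : 'I_k) : nat := absz (M%:Z + e * n j).
Definition W0 z (M : nat) : R := \prod_(j : 'I_k) (1 - z j) ^+ M.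
Definition valM a e z n M : R := (numQ a z (exf e n M)).[0] / W0 z M.
Definition adm (e : int) n (M : nat) := forall j, 0 <= M%:Z + e * n j.

Lemma sym_valM a e z n : sym a e z n = valM a e z n (mexp n).
Proof.
rewrite /sym /valM /W0; congr (_ / _); congr (_.[0]).
have -> : sym_num a e z n = numE a z (exf e n (mexp n)) by [].
by rewrite numE_dvd mulKp ?den_neq0.
Qed.

Lemma prod_perm (T : comNzRingType) (s : 'S_k) (F : 'I_k -> T) :
  \prod_(j : 'I_k) F (s j) = \prod_(j : 'I_k) F j.
Proof. by rewrite [RHS](reindex_inj (@perm_inj _ s)). Qed.

Lemma numE_addM a z (ex : 'I_k -> nat) (d : nat) :
  numE a z (fun j => (ex j + d)%N) = numE a z ex * (\prod_(j : 'I_k) Wt z j) ^+ d.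
Proof.
rewrite /numE mulr_suml; apply: eq_bigr => s _.
rewrite -!mulrA; congr (_ * (_ * _)).
under eq_bigr => j _ do rewrite exprD.
by rewrite big_split /= prodrXl (prod_perm s (Wt z)).
Qed.

Lemma numQ_addM a z (ex : 'I_k -> nat) (d : nat) :
  numQ a z (fun j => (ex j + d)%N) = numQ a z ex * (\prod_(j : 'I_k) Wt z j) ^+ d.
Proof.
apply: (mulfI (den_neq0 z)).
by rewrite -numE_dvd numE_addM numE_dvd mulrA.
Qed.

Lemma exf_add e n M d : adm e n M -> exf e n (M + d) = (fun j => (exf e n M j + d)%N).
Proof.
move=> hM; apply: functional_extensionality => j; rewrite /exf.
rewrite PoszD addrAC; move: (hM j); case: (M%:Z + e * n j) => //= m _.
Qed.

Lemma Wt0 z j : (Wt z j).[0] = 1 - z j.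
Proof. by rewrite /Wt /Zt !hornerE. Qed.

Lemma W0_neq0 z M : (forall j, z j != 1) -> W0 z M != 0.
Proof.
move=> hz; apply/prodf_neq0 => j _; rewrite expf_neq0 //.
by rewrite subr_eq0 eq_sym.
Qed.

Lemma valM_add a e z n M d : (forall j, z j != 1) -> adm e n M ->
  valM a e z n (M + d) = valM a e z n M.
Proof.
move=> hz hM; rewrite /valM exf_add // numQ_addM hornerM horner_exp horner_prod.
under eq_bigr => j _ do rewrite Wt0.
have -> : W0 z (M + d) = W0 z M * (\prod_j (1 - z j)) ^+ d.
  by rewrite /W0 -prodrXl -big_split /=; apply: eq_bigr => j _; rewrite exprD.
have hP : (\prod_j (1 - z j)) ^+ d != 0.
  rewrite expf_neq0 //; apply/prodf_neq0 => j _; by rewrite subr_eq0 eq_sym.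
by field; rewrite hP W0_neq0.
Qed.

Lemma valM_eq a e z n M1 M2 : (forall j, z j != 1) -> adm e n M1 -> adm e n M2 ->
  valM a e z n M1 = valM a e z n M2.
Proof.
move=> hz; wlog h12 : M1 M2 / (M1 <= M2)%N.
  move=> W h1 h2; case: (leqP M1 M2) => h; first exact: W.
  by symmetry; apply: W => //; apply: ltnW.
move=> h1 h2; by rewrite -(subnKC h12) valM_add.
Qed.

Lemma absz_le_mexp n j : (absz (n j) <= mexp n)%N.
Proof. by rewrite /mexp (bigD1 j) //= leq_addr. Qed.

Lemma adm_ge e n M : absz e = 1%N -> (mexp n <= M)%N -> adm e n M.
Proof.
move=> he hM j; have h1 := absz_le_mexp n j.
have : (absz (e * n j)%R <= M)%N by rewrite abszM he mul1n (leq_trans h1).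
set x := e * n j => hx.
have h2 : - x <= (absz x)%:Z by rewrite -abszN; exact: lez_abs.
have h3 : (absz x)%:Z <= M%:Z by rewrite lez_nat.
lia.
Qed.

Lemma e_sq (e : int) : absz e = 1%N -> e * e = 1.
Proof. by case: e => [[|[|]]|[|]] //=. Qed.

Lemma exf_shift e n i M : absz e = 1%N -> adm e n M ->
  exf e (shift n i e) M = (fun j => (exf e n M j + (j == i))%N).
Proof.
move=> he hM; apply: functional_extensionality => j; rewrite /exf /shift.
case: eqP => _; last by rewrite addn0.
rewrite mulrDr e_sq // addrA; move: (hM j).
by case: (M%:Z + e * n j) => //= m _; rewrite addn1.
Qed.

Lemma adm_shift e n i M : absz e = 1%N -> adm e n M -> adm e (shift n i e) M.
Proof.
move=> he hM j; rewrite /shift; case: eqP => _ //.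
rewrite mulrDr e_sq // addrA; have := hM j; lia.
Qed.

Lemma numE_delta a z (ex : 'I_k -> nat) i :
  numE a z (fun j => (ex j + (j == i))%N) =
  \sum_(s : 'S_k) (-1) ^+ odd_perm s *
     (\prod_(A : 'I_k) \prod_(B : 'I_k | (B < A)%N) (Zt z (s A) - a *: Zt z (s B))) *
     \prod_(j : 'I_k) Wt z (s j) ^+ ex j * Wt z (s i).
Proof.
apply: eq_bigr => s _; rewrite -!mulrA; congr (_ * (_ * _)).
under eq_bigr => j _ do rewrite exprD.
rewrite big_split /=; congr (_ * _).
rewrite (bigD1 i) //= eqxx expr1 big1 ?mulr1 // => j /negPf ->; by rewrite expr0.
Qed.

Lemma sum_numE_delta a z ex :
  \sum_i numE a z (fun j => (ex j + (j == i))%N) = (\sum_j Wt z j) * numE a z ex.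
Proof.
under eq_bigr => i _ do rewrite numE_delta.
rewrite exchange_big /= /numE mulr_sumr; apply: eq_bigr => s _.
rewrite -mulr_sumr mulrC; congr (_ * _).
by rewrite [RHS](reindex_inj (@perm_inj _ s)).
Qed.

Lemma sum_shift a e z n : (forall j, z j != 1) -> absz e = 1%N ->
  \sum_i sym a e z (shift n i e) = (k%:R - \sum_j z j) * sym a e z n.
Proof.
move=> hz he.
have hM : adm e n (mexp n).+1 by apply: adm_ge.
have hMs i : adm e (shift n i e) (mexp n).+1 by apply: adm_shift.
rewrite sym_valM (@valM_eq a e z n _ _ hz (adm_ge he (leqnn _)) hM).
under eq_bigr => i _ do rewrite sym_valM (@valM_eq a e z _ _ _ hz (adm_ge he (leqnn _)) (hMs i)).
rewrite /valM -mulr_suml mulrA; congr (_ / _).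
under eq_bigr => i _ do rewrite exf_shift //.
rewrite -horner_sum.
have -> : \sum_i numQ a z (fun j => (exf e n (mexp n).+1 j + (j == i))%N)
         = (\sum_j Wt z j) * numQ a z (exf e n (mexp n).+1).
  apply: (mulfI (den_neq0 z)); rewrite mulr_sumr.
  under eq_bigr => i _ do rewrite -numE_dvd.
  by rewrite sum_numE_delta numE_dvd mulrCA.
rewrite hornerM horner_sum; congr (_ * _).
under eq_bigr => j _ do rewrite Wt0.
by rewrite sumrB sumr_const card_ord.
Qed.
End Num.

Lemma ord_neq (k : nat) (x y : 'I_k) : x <> y -> nat_of_ord x <> nat_of_ord y.
Proof. by move=> h hv; apply: h; apply: val_inj. Qed.

Lemma pred_tperm (k : nat) (i j : 'I_k) (p : 'I_k * 'I_k) : val j = (val i).+1 ->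
  ((p.2 < p.1)%N && (p != (j, i))) =
  ((tperm i j p.2 < tperm i j p.1)%N && (p != (i, j))).
Proof.
case: p => a b /= hij; rewrite !xpair_eqE -!val_eqE /=.
case: (tpermP i j a) => [->|->|/ord_neq ha1 /ord_neq ha2];
case: (tpermP i j b) => [->|->|/ord_neq hb1 /ord_neq hb2]; rewrite ?eqxx /=; lia.
Qed.

Section Bd.
Variable R : numClosedFieldType.
Variable k : nat.
Implicit Types (a : R) (z : 'I_k -> R) (n : 'I_k -> int).

Definition Vs a z (s : 'S_k) : {poly R} :=
  \prod_(A : 'I_k) \prod_(B : 'I_k | (B < A)%N) (Zt z (s A) - a *: Zt z (s B)).
Definition Es z (ex : 'I_k -> nat) (s : 'S_k) : {poly R} := \prod_(j : 'I_k) Wt z (s j) ^+ ex j.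

Lemma Vs_tperm a z s (i j : 'I_k) : val j = (val i).+1 ->
  Vs a z (tperm i j * s)%g * (Zt z (s j) - a *: Zt z (s i)) =
  Vs a z s * (Zt z (s i) - a *: Zt z (s j)).
Proof.
move=> hij; have {}hij : nat_of_ord j = (nat_of_ord i).+1 by [].
have hneq : i != j by apply/eqP => e; move: hij; rewrite e; lia.
rewrite /Vs !pair_big_dep /=.
set G := fun p : 'I_k * 'I_k => Zt z (s p.1) - a *: Zt z (s p.2).
under eq_bigr => p _ do rewrite !permM.
have finj : injective (fun p : 'I_k * 'I_k => (tperm i j p.1, tperm i j p.2)).
  by move=> [x1 x2] [y1 y2] /= [/perm_inj -> /perm_inj ->].
rewrite (reindex_inj finj) /= .
under eq_bigr => p _ do rewrite !tpermK.
rewrite (bigD1 (i, j)) /=; last by rewrite tpermL tpermR; lia.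
rewrite [in RHS](bigD1 (j, i)) /=; last by lia.
under eq_bigl => p do rewrite -pred_tperm //.
set P := \prod_(p | _) _; ring.
Qed.

Lemma sum_T_zero a z ex (i j : 'I_k) : val j = (val i).+1 -> ex i = ex j ->
  \sum_(s : 'S_k) (-1) ^+ odd_perm s * Vs a z s * Es z ex s * (Zt z (s i) - a *: Zt z (s j)) = 0.
Proof.
move=> hij hex; have hij' : nat_of_ord j = (nat_of_ord i).+1 by [].
have hneq : i != j by apply/eqP => e; move: hij'; rewrite e; lia.
set T := fun s : 'S_k => (-1) ^+ odd_perm s * Vs a z s * Es z ex s * (Zt z (s i) - a *: Zt z (s j)).
have hT : forall s, T (tperm i j * s)%g = - T s.
  move=> s; rewrite /T odd_mul_tperm hneq /=.
  have -> : Es z ex (tperm i j * s)%g = Es z ex s.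
    rewrite /Es (reindex_inj (@perm_inj _ (tperm i j))) /=.
    apply: eq_bigr => l _; rewrite permM tpermK; congr (_ ^+ _).
    by case: (tpermP i j l) => [->|->|] //.
  rewrite !permM tpermL tpermR.
  rewrite -mulrA [Es _ _ _ * _]mulrC mulrA -[X in X * _ = _]mulrA Vs_tperm //.
  case: (odd_perm s); rewrite /= ?expr0 ?expr1; ring.
have : \sum_s T s = - \sum_s T s.
  rewrite [in LHS](reindex_inj (mulgI (tperm i j))) /= -sumrN.
  by apply: eq_bigr => s _; rewrite hT.
move/eqP; rewrite -subr_eq0 opprK -mulr2n.
rewrite -mulr_natr mulf_eq0 => /orP [/eqP //|].
by rewrite -polyC_natr polyC_eq0 pnatr_eq0.
Qed.
End Bd.

Section Bd2.
Variable R : numClosedFieldType.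
Variable k : nat.
Implicit Types (a : R) (z : 'I_k -> R) (n : 'I_k -> int).

Lemma boundary a e z n (i j : 'I_k) : (forall l, z l != 1) -> absz e = 1%N ->
  val j = (val i).+1 -> n i = n j ->
  sym a e z (shift n i e) - a * sym a e z (shift n j e) - (1 - a) * sym a e z n = 0.
Proof.
move=> hz he hij hn.
have hM : adm e n (mexp n).+1 by apply: adm_ge.
have hMs l : adm e (shift n l e) (mexp n).+1 by apply: adm_shift.
rewrite !sym_valM (@valM_eq R k a e z n _ _ hz (adm_ge he (leqnn _)) hM).
rewrite (@valM_eq R k a e z _ _ _ hz (adm_ge he (leqnn _)) (hMs i)).
rewrite (@valM_eq R k a e z _ _ _ hz (adm_ge he (leqnn _)) (hMs j)).
rewrite /valM !exf_shift //.
set ex := exf e n (mexp n).+1.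
have hex : ex i = ex j by rewrite /ex /exf hn.
suff -> : numQ a z (fun l => (ex l + (l == i))%N) =
   a%:P * numQ a z (fun l => (ex l + (l == j))%N) + (1 - a)%:P * numQ a z ex.
  by rewrite hornerD !hornerM !hornerC; field; rewrite W0_neq0.
apply: (mulfI (den_neq0 z)).
rewrite mulrDr mulrCA [_ * (_ * numQ _ _ ex)]mulrCA -!numE_dvd.
apply/eqP; rewrite -subr_eq0 !numE_delta /numE !mulr_sumr -big_split -sumrB.
have hT := @sum_T_zero R k a z ex i j hij hex.
rewrite -[X in _ == X]oppr0 -[X in _ == - X]hT -sumrN; apply/eqP.
apply: eq_bigr => s _.
rewrite -/(Vs a z s) -/(Es z ex s) /Wt -!mul_polyC rmorphB rmorph1 /=.
set V := Vs a z s; set E := Es z ex s; set x := Zt z (s i); set y := Zt z (s j).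
set c := a%:P; set sg := (-1) ^+ odd_perm s.
ring.
Qed.
End Bd2.

Section Tele.
Variable R : comNzRingType.
Variable k : nat.
Variable v : nat -> int.
Hypothesis wv : forall l1 l2, (l1 <= l2)%N -> (l2 < k)%N -> v l2 <= v l1.
Variable a : R.
Variable phi : nat -> R.

Definition csz l := #|[pred r : 'I_k | v r == v l]|.
Definition kap l := #|[pred r : 'I_k | (r <= l)%N && (v r == v l)]|.

Lemma kapS l : (l.+1 < k)%N -> v l = v l.+1 -> kap l.+1 = (kap l).+1.
Proof.
move=> hl hv; rewrite /kap (cardD1 (Ordinal hl)) !inE /= ltnSn eqxx /= add1n; congr S.
apply: eq_card => r; rewrite !inE -val_eqE /= hv.
case: (ltngtP r l.+1) => //= h; lia.
Qed.

Lemma kap1 l : (l < k)%N -> (l = 0%N \/ v l.-1 != v l) -> kap l = 1%N.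
Proof.
move=> hl h; rewrite /kap -(card1 (Ordinal hl)); apply: eq_card => r.
rewrite !inE -val_eqE /=.
case: (ltngtP r l) => //= hrl; last by rewrite hrl eqxx.
case: h => [e|h]; first by move: hrl; rewrite e.
apply/negbTE; rewrite eq_sym.
have h1 : v l <= v l.-1 by apply: wv; lia.
have h2 : v l.-1 <= v r by apply: wv; lia.
move: h; apply: contra => /eqP e; apply/eqP; apply: le_anti.
by rewrite h1 /= e h2.
Qed.

Definition lastn l := ~~ (l.+1 < k)%N || (v l.+1 != v l).

Lemma kap_last l : (l < k)%N -> lastn l -> kap l = csz l.
Proof.
move=> hl hla; rewrite /kap /csz; apply: eq_card => r; rewrite !inE.
case: (leqP r l) => //= hrl; apply/esym/negbTE.
move: hla; rewrite /lastn; case: ltnP => /= h1; last by have := ltn_ord r; lia.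
move=> hne; have h2 : v r <= v l.+1 by apply: wv.
have h3 : v l.+1 <= v l by apply: wv.
apply/eqP => e; move/eqP: hne; apply; apply: le_anti; by rewrite h3 /= -e h2.
Qed.

Hypothesis hb : forall l, (l.+1 < k)%N -> v l = v l.+1 -> phi l = a * phi l.+1.
Definition Tl l := (1 - a ^+ kap l) * phi l.

Lemma tele_step l : (l < k)%N ->
  (1 - a) * phi l = Tl l - (if (0 < l)%N && (v l.-1 == v l) then Tl l.-1 else 0).
Proof.
move=> hl; case: l hl => [|m] hl /=.
  by rewrite subr0 /Tl (kap1 hl (or_introl erefl)) expr1.
case: eqP => hv.
  rewrite /Tl (kapS hl hv) (hb hl hv) exprS; ring.
have hv' : v m.+1.-1 != v m.+1 by apply/eqP.
by rewrite subr0 /Tl (kap1 hl (or_intror hv')) expr1.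
Qed.

Lemma tele_last : \sum_(0 <= l < k | lastn l) (1 - a ^+ csz l) * phi l =
   (1 - a) * \sum_(0 <= l < k) phi l.
Proof.
rewrite mulr_sumr (eq_big_nat _ _ (fun l hl => tele_step (proj2 (andP hl)))) sumrB.
have [hk0|[k' hk]] : k = 0%N \/ exists k', k = k'.+1.
  by case: (k) => [|k']; [left|right; exists k'].
  by rewrite hk0 !big_geq // subrr.
have hk' : (k' < k)%N by rewrite hk.
rewrite big_mkcond /=.
rewrite hk [in LHS]big_nat_recr // [in X in _ = X - _]big_nat_recr //.
rewrite [in X in _ = _ - X]big_nat_recl // /= add0r.
have hlk : lastn k' by rewrite /lastn hk ltnn.
rewrite hlk -(kap_last hk' hlk).
rewrite addrAC -sumrB; congr (_ + _); apply: eq_big_nat => i /andP [_ hi].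
have hi1 : (i.+1 < k)%N by rewrite hk.
have hi2 : (i < k)%N by lia.
rewrite /Tl; case: ifP => hl.
  rewrite (kap_last hi2 hl); move: hl; rewrite /lastn hi1 /= eq_sym => /negPf ->.
  by rewrite subr0.
move: hl; rewrite /lastn hi1 /= eq_sym => /negbFE ->; by rewrite subrr.
Qed.
End Tele.

Section TeleF.
Variable R : comNzRingType.
Variable k : nat.
Variable v : nat -> int.
Hypothesis wv : forall l1 l2, (l1 <= l2)%N -> (l2 < k)%N -> v l2 <= v l1.
Variable a : R.
Variable phi : nat -> R.

Definition kapF l := #|[pred r : 'I_k | (l <= r)%N && (v r == v l)]|.

Lemma kapFS l : (l.+1 < k)%N -> v l = v l.+1 -> kapF l = (kapF l.+1).+1.
Proof.
move=> hl hv; have hl' : (l < k)%N by lia.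
rewrite /kapF (cardD1 (Ordinal hl')) !inE /= leqnn eqxx /= add1n; congr S.
apply: eq_card => r; rewrite !inE -val_eqE /= -hv.
case: (ltngtP l r) => //= h; lia.
Qed.

Lemma kapF1 l : (l < k)%N -> (~~ (l.+1 < k)%N \/ v l.+1 != v l) -> kapF l = 1%N.
Proof.
move=> hl h; rewrite /kapF -(card1 (Ordinal hl)); apply: eq_card => r.
rewrite !inE -val_eqE /=.
case: (ltngtP l r) => //= hrl; last by rewrite hrl eqxx.
case: h => [h|h]; first by have := ltn_ord r; lia.
apply/negbTE.
have h1 : v l.+1 <= v l by apply: wv; have := ltn_ord r; lia.
have h2 : v r <= v l.+1 by apply: wv; [lia | exact: ltn_ord].
move: h; apply: contra => /eqP e; apply/eqP; apply: le_anti.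
by rewrite h1 /= -e h2.
Qed.

Definition firstn l := (l == 0%N) || (v l.-1 != v l).

Lemma kapF_first l : (l < k)%N -> firstn l -> kapF l = csz k v l.
Proof.
move=> hl hfi; rewrite /kapF /csz; apply: eq_card => r; rewrite !inE.
case: (leqP l r) => //= hrl; apply/esym/negbTE.
move: hfi; rewrite /firstn; case: l hl hrl => [|l] //= hl hrl hne.
have h2 : v l <= v r by apply: wv; lia.
have h3 : v l.+1 <= v l by apply: wv; lia.
apply/eqP => e; move/eqP: hne; apply; apply: le_anti; by rewrite h3 /= -e h2.
Qed.

Hypothesis hf : forall l, (l.+1 < k)%N -> v l = v l.+1 -> phi l.+1 = a * phi l.
Definition TF l := (1 - a ^+ kapF l) * phi l.

Lemma teleF_step l : (l < k)%N ->
  (1 - a) * phi l = TF l - (if (l.+1 < k)%N && (v l == v l.+1) then TF l.+1 else 0).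
Proof.
move=> hl; case: (ltnP l.+1 k) => hl1 /=; last first.
  by rewrite subr0 /TF (kapF1 hl (or_introl _)) ?expr1 //; rewrite -leqNgt.
case: eqP => hv.
  rewrite /TF (kapFS hl1 hv) (hf hl1 hv) exprS; ring.
have hv' : v l.+1 != v l by apply/eqP => e; apply: hv.
by rewrite subr0 /TF (kapF1 hl (or_intror hv')) expr1.
Qed.

Lemma tele_first : \sum_(0 <= l < k | firstn l) (1 - a ^+ csz k v l) * phi l =
   (1 - a) * \sum_(0 <= l < k) phi l.
Proof.
rewrite mulr_sumr (eq_big_nat _ _ (fun l hl => teleF_step (proj2 (andP hl)))) sumrB.
have [hk0|[k' hk]] : k = 0%N \/ exists k', k = k'.+1.
  by case: (k) => [|k']; [left|right; exists k'].
  by rewrite hk0 !big_geq // subrr.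
have hk0 : (0 < k)%N by rewrite hk.
rewrite big_mkcond /=.
have Hl (F : nat -> R) : \sum_(0 <= i < k) F i = F 0%N + \sum_(0 <= i < k') F i.+1.
  by rewrite hk big_nat_recl.
have Hr (F : nat -> R) : \sum_(0 <= i < k) F i = \sum_(0 <= i < k') F i + F k'.
  by rewrite hk big_nat_recr.
rewrite [in LHS]Hl [in X in _ = X - _]Hl [in X in _ = _ - X]Hr /= -hk ltnn /= addr0.
have hf0 : firstn 0 by [].
rewrite -(kapF_first hk0 hf0) -/(TF 0).
rewrite -addrA -sumrB; congr (_ + _); apply: eq_big_nat => i /andP [_ hi].
have hi1 : (i.+1 < k)%N by rewrite hk.
rewrite hi1 /=; case: (boolP (v i == v i.+1)) => hv.
  have -> : firstn i.+1 = false by rewrite /firstn /= hv.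
  by rewrite subrr.
have hfi : firstn i.+1 by rewrite /firstn /= hv.
by rewrite hfi /TF (kapF_first hi1 hfi) subr0.
Qed.
End TeleF.

Section Cq.
Variable R : numClosedFieldType.
Variable k : nat.
Variable q : R.
Implicit Types (n : 'I_k -> int).

Lemma nat_valE n (i : 'I_k) : nat_val n i = n i.
Proof. by rewrite /nat_val valK. Qed.

Definition mult n (c : int) : nat := #|[pred i : 'I_k | n i == c]|.
Definition lastv n (l : 'I_k) : bool := [forall r : 'I_k, (l < r)%N ==> (n r != n l)].
Definition Gq n : R := \prod_(l | lastv n l) qfact q (mult n (n l)).

Lemma qfact0 : qfact q 0 = 1.
Proof. by rewrite /qfact big_geq. Qed.

Lemma qfactS c : qfact q c.+1 = qfact q c * ((1 - q ^+ c.+1) / (1 - q)).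
Proof. by rewrite /qfact big_nat_recr. Qed.

Lemma Gq_seq n (V : seq int) : uniq V -> (forall i, n i \in V) ->
  Gq n = \prod_(c <- V) qfact q (mult n c).
Proof.
move=> uV hV.
rewrite (bigID (fun c => c \in codom n)) /= [X in _ * X]big1 ?mulr1; last first.
  move=> c hc; have -> : mult n c = 0%N.
    apply: eq_card0 => i.
    rewrite !inE; apply/negbTE; apply: contra hc => /eqP <-; exact: codom_f.
  exact: qfact0.
rewrite -big_filter /Gq.
have -> : \prod_(l | lastv n l) qfact q (mult n (n l)) =
    \prod_(c <- [seq n l | l <- enum (lastv n)]) qfact q (mult n c).
  by rewrite big_map big_enum.
apply: perm_big; apply: uniq_perm.
- rewrite map_inj_in_uniq ?enum_uniq // => l1 l2.
  rewrite !mem_enum => h1 h2 e.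
  case: (ltngtP l1 l2) => h; last exact: val_inj.
  + by move/forallP/(_ l2): h1; rewrite h e eqxx.
  + by move/forallP/(_ l1): h2; rewrite h e eqxx.
- by rewrite filter_uniq.
- move=> c; rewrite mem_filter; apply/mapP/andP.
  + move=> [l hl ->]; split; [exact: codom_f | exact: hV].
  + move=> [/codomP [i ->] _].
    pose l := [arg max_(r > i | n r == n i) (val r)].
    case: (@arg_maxnP _ i (fun r => n r == n i) val (eqxx _)) => l' /eqP hl' hmax.
    exists l'; last by rewrite hl'.
    rewrite mem_enum; apply/forallP => r; apply/implyP => hr.
    apply/negP => /eqP e; have := hmax r; rewrite e hl' eqxx => /(_ isT).
    rewrite /geq /=; move: hr; simpl; lia.
Qed.

Lemma mult_shift n (j : 'I_k) (c : int) :
  (mult (shift n j 1) c + (n j == c) = mult n c + ((n j + 1)%R == c))%N.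
Proof.
rewrite /mult (cardD1 j) [in RHS](cardD1 j) !inE /shift eqxx.
set Y := #|[predD1 [pred i | n i == c] & j]|.
have -> : #|[predD1 [pred i | (if i == j then (n i + 1)%R else n i) == c] & j]| = Y.
  by apply: eq_card => i; rewrite !inE; case: eqP.
lia.
Qed.

Lemma prod_seq2 (F : int -> R) (V : seq int) c1 c2 : uniq V -> c1 \in V -> c2 \in V -> c2 != c1 ->
  \prod_(c <- V) F c = F c1 * F c2 * \prod_(c <- V | (c != c1) && (c != c2)) F c.
Proof.
move=> uV h1 h2 h12.
rewrite (bigD1_seq c1 h1 uV) /= -big_filter.
have W2 : c2 \in [seq i <- V | i != c1] by rewrite mem_filter h12.
have uW : uniq [seq i <- V | i != c1] by rewrite filter_uniq.
rewrite (bigD1_seq c2 W2 uW) /= big_filter_cond /= mulrA.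
congr (_ * _); apply: eq_bigl => c; by rewrite andbC.
Qed.

Lemma Gq_shift n (j : 'I_k) :
  Gq (shift n j 1) * ((1 - q ^+ mult n (n j)) / (1 - q)) =
  Gq n * ((1 - q ^+ (mult n (n j + 1)).+1) / (1 - q)).
Proof.
set m := shift n j 1.
set V := undup (codom n ++ codom m).
have uV : uniq V by apply: undup_uniq.
have hV f i : f i \in codom f by apply: codom_f.
have Vn i : n i \in V by rewrite mem_undup mem_cat codom_f.
have Vm i : m i \in V by rewrite mem_undup mem_cat codom_f orbT.
rewrite (Gq_seq uV Vm) (Gq_seq uV Vn).
set c1 := n j; set c2 := n j + 1.
have c12 : c2 != c1 by rewrite /c2 /c1 -subr_eq0 addrAC subrr add0r oner_eq0.
have Vc1 : c1 \in V by apply: Vn.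
have Vc2 : c2 \in V by have := Vm j; rewrite /m /shift eqxx.
rewrite !(prod_seq2 _ uV Vc1 Vc2 c12).
have -> : \prod_(i <- V | (i != c1) && (i != c2)) qfact q (mult m i) =
             \prod_(i <- V | (i != c1) && (i != c2)) qfact q (mult n i).
  apply: eq_bigr => c /andP [h1 h2].
  have := mult_shift n j c; rewrite -/m -/c1 -/c2 eq_sym (negbTE h1) eq_sym (negbTE h2).
  by rewrite !addn0 => ->.
have e1 := mult_shift n j c1; have e2 := mult_shift n j c2.
rewrite -/m -/c1 -/c2 eqxx (negbTE c12) eq_sym (negbTE c12) /= in e1 e2.
have hm1 : mult n c1 = (mult m c1).+1 by lia.
have hm2 : mult m c2 = (mult n c2).+1 by lia.
rewrite hm1 hm2 !qfactS.
set P := \prod_(i <- V | _) _.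
ring.
Qed.

Lemma csize_mult n (l : 'I_k) : csize_at n l = mult n (n l).
Proof. by rewrite /csize_at nat_valE. Qed.

Lemma last_lastv n (l : 'I_k) : weyl n -> is_last n l = lastv n l.
Proof.
move=> hw; rewrite /is_last /lastv.
case: (ltnP l.+1 k) => h /=; last first.
  apply/esym/forallP => r; apply/implyP => hr; have := ltn_ord r; lia.
have -> : nat_val n l.+1 = n (Ordinal h) by rewrite -nat_valE.
apply/idP/idP.
- move=> hne; apply/forallP => r; apply/implyP => hr.
  have h1 : n r <= n (Ordinal h) by apply: hw.
  have h2 : n (Ordinal h) <= n l by apply: hw; rewrite /= leqnSn.
  apply: contra hne => /eqP e; rewrite eq_le h2 /= -e h1.
  done.
- by move/forallP/(_ (Ordinal h)); rewrite /= ltnSn.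
Qed.
Definition c0 : R := (-1) ^+ k * (q ^+ ((k * (k - 1)) %/ 2))^-1.

Lemma Cq_G n : weyl n -> Cq q n = c0 * Gq n.
Proof.
move=> hw; rewrite /Cq /c0 /Gq; congr (_ * _).
rewrite (eq_bigl _ _ (fun l => @last_lastv n l hw)); apply: eq_bigr => l _; by rewrite csize_mult.
Qed.

Lemma first_pred n (j : 'I_k) : weyl n -> is_first n j -> (0 < j)%N ->
  exists p : 'I_k, [/\ nat_of_ord j = (nat_of_ord p).+1, nat_val n j.-1 = n p & n j + 1 <= n p].
Proof.
move=> hw hf hj; have hp : (j.-1 < k)%N by have := ltn_ord j; lia.
exists (Ordinal hp); split => /=; first by lia.
  by rewrite -nat_valE.
move: hf; rewrite /is_first (_ : (val j == 0%N) = false) /=; last by lia.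
rewrite (_ : nat_val n j.-1 = n (Ordinal hp)); last by rewrite -nat_valE.
have : n j <= n (Ordinal hp) by apply: hw => /=; lia.
rewrite le_eqVlt eq_sym => /orP [-> //|].
by move=> h _; lia.
Qed.

Lemma weyl_shift n (j : 'I_k) : weyl n -> is_first n j -> weyl (shift n j 1).
Proof.
move=> hw hf i1 i2 h12; rewrite /shift.
case: (eqVneq i1 j) => [e1|h1]; case: (eqVneq i2 j) => [e2|h2].
- by rewrite e1 e2 lexx.
- have := hw _ _ h12; rewrite e1; lia.
- rewrite e2.
  have hlt : (i1 < j)%N.
    have hne : nat_of_ord i1 <> nat_of_ord j by move=> e; move/eqP: h1; apply; apply: val_inj.
    have : (i1 <= j)%N by rewrite -e2.
    lia.
  have hj : (0 < j)%N by lia.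
  have [p [hpj hpv hp]] := first_pred hw hf hj.
  have : n p <= n i1 by apply: hw; lia.
  lia.
- exact: hw.
Qed.
Lemma fwd_coefE n (j : 'I_k) : weyl n -> is_first n j ->
  fwd_coef q n j = 1 - q ^+ (mult n (n j + 1)).+1.
Proof.
move=> hw hf; rewrite /fwd_coef.
case: (posnP j) => hj.
  rewrite /=.
  have -> : mult n (n j + 1) = 0%N.
    apply: eq_card0 => i; rewrite !inE; apply/negbTE/eqP => e.
    have : n i <= n j by apply: hw; rewrite hj.
    lia.
  by rewrite expr1.
have [p [hpj hpv hp]] := first_pred hw hf hj.
rewrite /=.
rewrite hpv; case: eqP => he.
  rewrite /csize_at hpv; congr (1 - q ^+ _.+1); apply: eq_card => i.
  by rewrite !inE; congr (_ == _); lia.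
have -> : mult n (n j + 1) = 0%N.
  apply: eq_card0 => i; rewrite !inE; apply/negbTE/eqP => e.
  case: (leqP i p) => hip.
    have : n p <= n i by apply: hw.
    lia.
  have : n i <= n j by apply: hw; lia.
  lia.
by rewrite expr1.
Qed.

Lemma qb_neq0 (c : nat) : 0 < q -> q < 1 -> 1 - q ^+ c.+1 != 0.
Proof.
move=> h0 h1; rewrite subr_eq0 eq_sym; apply/negP => /eqP e.
have : q ^+ c.+1 < 1 by rewrite exprn_ilt1 ?ltW.
by rewrite e ltxx.
Qed.

Lemma qfact_neq0 c : 0 < q -> q < 1 -> qfact q c != 0.
Proof.
move=> h0 h1; rewrite /qfact big_seq; apply: (big_rec (fun x : R => x != 0)) => [|r x hr hx]; first exact: oner_neq0.
rewrite mem_index_iota in hr; case: r hr => // r _.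
by rewrite !mulf_neq0 ?invr_eq0 ?qb_neq0 // -(expr1 q) qb_neq0.
Qed.

Lemma Cq_neq0 n : 0 < q -> q < 1 -> Cq q n != 0.
Proof.
move=> h0 h1; rewrite /Cq !mulf_neq0 ?signr_eq0 ?invr_eq0 ?expf_neq0 //; first by rewrite gt_eqF.
apply/prodf_neq0 => l _; exact: qfact_neq0.
Qed.

Lemma Cq_ratio n (j : 'I_k) : 0 < q -> q < 1 -> weyl n -> is_first n j ->
  Cq q n * fwd_coef q n j = (1 - q ^+ csize_at n j) * Cq q (shift n j 1).
Proof.
move=> h0 h1 hw hf.
rewrite (Cq_G hw) (Cq_G (weyl_shift hw hf)) (fwd_coefE hw hf) csize_mult.
have := Gq_shift n j.
have hq : 1 - q != 0 by rewrite -(expr1 q) qb_neq0.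
move=> e.
have e' : Gq (shift n j 1) * (1 - q ^+ mult n (n j)) = Gq n * (1 - q ^+ (mult n (n j + 1)).+1).
  by move: e; rewrite !mulrA => /(congr1 (fun x => x * (1 - q))); rewrite -!mulrA mulVf // !mulr1.
by rewrite -mulrA -e'; ring.
Qed.
End Cq.

Section Conv.
Variable R : numClosedFieldType.
Variable k : nat.

Definition ext (F : 'I_k -> R) (l : nat) : R := odflt 0 (omap F (insub l)).

Lemma extE F (j : 'I_k) : ext F j = F j.
Proof. by rewrite /ext valK. Qed.

Lemma sum_ext F : \sum_(j : 'I_k) F j = \sum_(0 <= l < k) ext F l.
Proof. by rewrite big_mkord; apply: eq_bigr => j _; rewrite extE. Qed.

Lemma weyl_nat (n : 'I_k -> int) : weyl n ->
  forall l1 l2, (l1 <= l2)%N -> (l2 < k)%N -> nat_val n l2 <= nat_val n l1.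
Proof.
move=> hw l1 l2 h12 h2; have h1 : (l1 < k)%N by lia.
rewrite (_ : nat_val n l2 = n (Ordinal h2)); last by rewrite -nat_valE.
rewrite (_ : nat_val n l1 = n (Ordinal h1)); last by rewrite -nat_valE.
exact: hw.
Qed.

Lemma csize_csz (n : 'I_k -> int) (j : 'I_k) : csize_at n j = csz k (nat_val n) j.
Proof.
rewrite /csize_at /csz; apply: eq_card => i; by rewrite !inE !nat_valE.
Qed.

Lemma tele_last_ord (n : 'I_k -> int) (a : R) (F : 'I_k -> R) : weyl n ->
  (forall i j : 'I_k, val j = (val i).+1 -> n i = n j -> F i = a * F j) ->
  \sum_(j | is_last n j) (1 - a ^+ csize_at n j) * F j = (1 - a) * \sum_j F j.
Proof.
move=> hw hb; rewrite sum_ext -(tele_last (weyl_nat hw)).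
- rewrite big_mkord; apply: eq_big => [j|j _].
    by rewrite /is_last /lastn nat_valE.
  by rewrite extE csize_csz.
- move=> l hl hv; have hl0 : (l < k)%N by lia.
  rewrite -[l]/(nat_of_ord (Ordinal hl0)) -[l.+1]/(nat_of_ord (Ordinal hl)) !extE.
  apply: hb => //; by rewrite -!nat_valE.
Qed.

Lemma tele_first_ord (n : 'I_k -> int) (a : R) (F : 'I_k -> R) : weyl n ->
  (forall i j : 'I_k, val j = (val i).+1 -> n i = n j -> F j = a * F i) ->
  \sum_(j | is_first n j) (1 - a ^+ csize_at n j) * F j = (1 - a) * \sum_j F j.
Proof.
move=> hw hb; rewrite sum_ext -(tele_first (weyl_nat hw)).
- rewrite big_mkord; apply: eq_big => [j|j _].
    by rewrite /is_first /firstn nat_valE.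
  by rewrite extE csize_csz.
- move=> l hl hv; have hl0 : (l < k)%N by lia.
  rewrite -[l]/(nat_of_ord (Ordinal hl0)) -[l.+1]/(nat_of_ord (Ordinal hl)) !extE.
  apply: hb => //; by rewrite -!nat_valE.
Qed.
End Conv.

Unset Implicit Arguments.
Set Strict Implicit.

Theorem proposition2p10 (R : numClosedFieldType) (k : nat) (q : R)
    (hq0 : 0 < q) (hq1 : q < 1) (z : 'I_k -> R) (hz : forall j, z j != 1) :
  let sz := \sum_(j : 'I_k) z j in
  [/\ (forall n : 'I_k -> int,
         (1 - q) * \sum_(i : 'I_k) nabla_bwd i (Psi_l q z) n = (q - 1) * sz * Psi_l q z n),
      (forall (n : 'I_k -> int) (i j : 'I_k), val j = (val i).+1 -> n i = n j ->
         nabla_bwd i (Psi_l q z) n - q * nabla_bwd j (Psi_l q z) n = 0)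
    & (forall n : 'I_k -> int, weyl n ->
         Hbwd q (Psi_l q z) n = (q - 1) * sz * Psi_l q z n)]
  /\
  [/\ (forall n : 'I_k -> int,
         (1 - q) * \sum_(i : 'I_k) nabla_fwd i (Psi_cfwd q z) n
           = (q - 1) * sz * Psi_cfwd q z n),
      (forall (n : 'I_k -> int) (i j : 'I_k), val j = (val i).+1 -> n i = n j ->
         q * nabla_fwd i (Psi_cfwd q z) n - nabla_fwd j (Psi_cfwd q z) n = 0),
      (forall n : 'I_k -> int, weyl n ->
         Hcfwd q (Psi_cfwd q z) n = (q - 1) * sz * Psi_cfwd q z n)
    & (forall n : 'I_k -> int, weyl n ->
         Hfwd q (Psi_r q z) n = (q - 1) * sz * Psi_r q z n)].
Proof.
move=> sz.
have em1 : absz (-1 : int) = 1%N by [].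
have ep1 : absz (1 : int) = 1%N by [].
have hq : q != 0 by rewrite gt_eqF.
have freeB : forall n, (1 - q) * \sum_(i : 'I_k) nabla_bwd i (Psi_l q z) n = (q - 1) * sz * Psi_l q z n.
  move=> n; rewrite /nabla_bwd sumrB sum_shift // sumr_const card_ord -mulr_natl /Psi_l -/sz.
  ring.
have freeF : forall n, (1 - q) * \sum_(i : 'I_k) nabla_fwd i (Psi_cfwd q z) n = (q - 1) * sz * Psi_cfwd q z n.
  move=> n; rewrite /nabla_fwd sumrB sum_shift // sumr_const card_ord -mulr_natl /Psi_cfwd -/sz.
  ring.
have bdB : forall (n : 'I_k -> int) (i j : 'I_k), val j = (val i).+1 -> n i = n j ->
         nabla_bwd i (Psi_l q z) n - q * nabla_bwd j (Psi_l q z) n = 0.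
  move=> n i j hij hn; have := @boundary R k q (-1) z n i j hz em1 hij hn.
  rewrite /nabla_bwd /Psi_l => <-; ring.
have bdF : forall (n : 'I_k -> int) (i j : 'I_k), val j = (val i).+1 -> n i = n j ->
         q * nabla_fwd i (Psi_cfwd q z) n - nabla_fwd j (Psi_cfwd q z) n = 0.
  move=> n i j hij hn; have := @boundary R k q^-1 1 z n i j hz ep1 hij hn.
  rewrite /nabla_fwd /Psi_cfwd => h.
  rewrite -[RHS](mulr0 q) -h; field; by rewrite hq.
have HcF : forall n : 'I_k -> int, weyl n ->
         Hcfwd q (Psi_cfwd q z) n = (q - 1) * sz * Psi_cfwd q z n.
  move=> n hw; rewrite -freeF /Hcfwd /Hfwd mulr_sumr.
  rewrite -(tele_first_ord (a := q) (F := fun j => nabla_fwd j (Psi_cfwd q z) n) hw); last first.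
    by move=> i j hij hn; apply/eqP; rewrite -subr_eq0 -oppr_eq0 opprB bdF.
  apply: eq_bigr => j hf.
  have hC := Cq_neq0 n hq0 hq1.
  have hCm := Cq_neq0 (shift n j 1) hq0 hq1.
  have hr := Cq_ratio hq0 hq1 hw hf.
  have hc : fwd_coef q n j = (1 - q ^+ csize_at n j) * Cq q (shift n j 1) / Cq q n.
    by rewrite -hr; field.
  rewrite /nabla_fwd hc; by field; rewrite hC hCm.
have HbB : forall n : 'I_k -> int, weyl n ->
         Hbwd q (Psi_l q z) n = (q - 1) * sz * Psi_l q z n.
  move=> n hw; rewrite -freeB /Hbwd.
  rewrite -(tele_last_ord (a := q) (F := fun j => nabla_bwd j (Psi_l q z) n) hw) //.
  by move=> i j hij hn; apply/eqP; rewrite -subr_eq0 bdB.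
split; split => //.
move=> n hw.
have hC := Cq_neq0 n hq0 hq1.
have -> : Hfwd q (Psi_r q z) n = Hcfwd q (Psi_cfwd q z) n / Cq q n.
  by rewrite /Hcfwd mulrC mulrA mulVf // mul1r.
by rewrite HcF // /Psi_r mulrA.
Qed.
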